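(* Let $\tau>0$, $T=\tau$, $H\in(1/2,1)$, $\lambda\in(1/2,H)$, and let $B^H$ be a fractional Brownian motion on $[0,T]$ with Hurst parameter $H$; fix a path of $B^H$ which is $\lambda$-Hölder continuous on $[0,T]$ and write $\|B^H\|_\lambda$ for its $\lambda$-Hölder seminorm on $[0,T]$. Let $\xi\in C^\lambda([-\tau,0];\mathbb{R})$ and let $f:C^\lambda([-\tau,0];\mathbb{R})\to\mathbb{R}$ satisfy $|f(\psi_2)-f(\psi_1)|\le M_1\|\psi_2-\psi_1\|$ for all $\psi_1,\psi_2\in C^\lambda([-\tau,0];\mathbb{R})$, for some constant $M_1>0$. Let $n>\tau$ be an integer, $\Delta=\tau/n$, $t_k=k\Delta$ for $k=-n,\dots,n$, and let $X^{(n)}$ be the Euler scheme $$X^{(n)}(t)=\xi(t),\ t\in[-\tau,0];\qquad X^{(n)}(t)=X^{(n)}(t_k)+f(\overline X^{(n)}_{t_k})\,(B^H(t)-B^H(t_k)),\ t\in[t_k,t_{k+1}],\ k=0,\dots,n-1.$$ For $s\le t$ in $\{t_0,\dots,t_n\}$ define $R^n(s,t)=X^{(n)}(t)-X^{(n)}(s)-f(\overline X^{(n)}_s)(B^H(t)-B^H(s))$. Then for all $s\le u\le t$ in $\{t_0,\dots,t_n\}$, $$|R^n(s,t)-R^n(s,u)-R^n(u,t)|\le M_1\,\|\overline X^{(n)}_u-\overline X^{(n)}_s\|\,\|B^H\|_\lambda\,|t-s|^\lambda.$$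
   Context: $\|\cdot\|$ denotes the supremum norm on $[-\tau,0]$. For $t\in[0,T]$, the segment $\overline X^{(n)}_t:[-\tau,0]\to\mathbb{R}$ is $\overline X^{(n)}_t(\theta)=X^{(n)}(t+\theta)$. $C^\lambda([-\tau,0];\mathbb{R})$ is the space of $\lambda$-Hölder continuous real functions on $[-\tau,0]$. *)

(* Defs.v *)
From HB Require Import structures.
From mathcomp Require Import all_boot all_order all_algebra.
From mathcomp Require Import all_classical all_reals.
From mathcomp Require Import topology normedtype exp.
Set Implicit Arguments. Unset Strict Implicit. Unset Printing Implicit Defensive.
Import Order.TTheory GRing.Theory Num.Theory.
Local Open Scope classical_set_scope.
Local Open Scope ring_scope.

Section Defs.
Variable R : realType.

Definition is_holder (lam a b : R) (g : R -> R) : Prop :=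
  exists C : R, forall s t, a <= s <= b -> a <= t <= b ->
    `|g t - g s| <= C * `|t - s| `^ lam.

Definition holder_seminorm (lam a b : R) (g : R -> R) : R :=
  sup [set x : R | exists s t : R, a <= s <= b /\ a <= t <= b /\ s != t /\
        x = `|g t - g s| / `|t - s| `^ lam].

Definition supnorm (tau : R) (psi : R -> R) : R :=
  sup [set x : R | exists theta : R, - tau <= theta <= 0 /\ x = `|psi theta|].

Definition segment (X : R -> R) (t : R) : R -> R := fun theta => X (t + theta).

Definition remR (f : (R -> R) -> R) (B X : R -> R) (s t : R) : R :=
  X t - X s - f (segment X s) * (B t - B s).

End Defs.

(* Main.v *)
Require Import Defs.
From HB Require Import structures.
From mathcomp Require Import all_boot all_order all_algebra.
From mathcomp Require Import all_classical all_reals.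
From mathcomp Require Import topology normedtype exp.
From mathcomp Require Import ring lra.
Import Order.TTheory GRing.Theory Num.Theory.
Local Open Scope ring_scope.

Section H.
Context {R : realType}.
Implicit Types (a b c lam : R) (g h : R -> R).

Lemma holder_nn lam a b g : is_holder lam a b g ->
  exists C, 0 <= C /\ forall s t, a <= s <= b -> a <= t <= b ->
    `|g t - g s| <= C * `|t - s| `^ lam.
Proof.
move=> [C HC]; exists `|C|; split => // s t hs ht.
apply: le_trans (HC s t hs ht) _; apply: ler_wpM2r; [exact: powR_ge0|exact: ler_norm].
Qed.

Lemma holder_ext lam a b g h : (forall x, a <= x <= b -> g x = h x) ->
  is_holder lam a b g -> is_holder lam a b h.
Proof.
move=> E [C HC]; exists C => s t hs ht; rewrite -!E //; exact: HC.
Qed.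

Lemma holder_glue lam a b c g : 0 <= lam -> a <= b -> b <= c ->
  is_holder lam a b g -> is_holder lam b c g -> is_holder lam a c g.
Proof.
move=> l0 ab bc /holder_nn[C1 [C10 H1]] /holder_nn[C2 [C20 H2]].
exists (C1 + C2).
have key : forall s t, a <= s <= c -> a <= t <= c -> s <= t ->
    `|g t - g s| <= (C1 + C2) * `|t - s| `^ lam.
  move=> s t /andP[as_ sc] /andP[at_ tc] st.
  have mono : forall x y, 0 <= x -> x <= y -> x `^ lam <= y `^ lam.
    by move=> x y x0 xy; apply: ge0_ler_powR => //; rewrite nnegrE //; lra.
  have hp : 0 <= `|t - s| `^ lam by exact: powR_ge0.
  case: (leP t b) => tb.
    apply: le_trans (H1 s t _ _) _; first (apply/andP; split; lra).
      by apply/andP; split; lra.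
    by rewrite mulrDl lerDl mulr_ge0.
  case: (leP b s) => bs.
    apply: le_trans (H2 s t _ _) _; first (apply/andP; split; lra).
      by apply/andP; split; lra.
    by rewrite mulrDl lerDr mulr_ge0.
  have -> : g t - g s = (g t - g b) + (g b - g s) by ring.
  apply: le_trans; first exact: ler_normD.
  rewrite mulrDl [X in _ <= X]addrC; apply: lerD.
    apply: le_trans (H2 b t _ _) _; first (apply/andP; split; lra).
      by apply/andP; split; lra.
    apply: ler_wpM2l => //; apply: mono => //; rewrite !ger0_norm; lra.
  apply: le_trans (H1 s b _ _) _; first (apply/andP; split; lra).
    by apply/andP; split; lra.
  apply: ler_wpM2l => //; apply: mono => //; rewrite !ger0_norm; lra.
move=> s t hs ht; case: (leP s t) => st; first exact: key.
by rewrite distrC (distrC t); apply: key => //; lra.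
Qed.

Lemma sup_ge0 (E : set R) : (forall x, E x -> 0 <= x) -> 0 <= sup E.
Proof.
move=> E0; case: (pselect (has_sup E)) => hs; last by rewrite sup_out.
have [[e Ee] _] := hs.
by apply: le_trans (E0 _ Ee) _; apply: sup_upper_bound.
Qed.

End H.
Arguments holder_nn {R lam a b g}.
Arguments holder_ext {R lam a b g h}.
Arguments holder_glue {R lam a b c g}.

Theorem lemma2 (R : realType) (tau H lam M1 : R) (B xi : R -> R)
    (f : (R -> R) -> R) (n : nat) (X : R -> R) :
  0 < tau ->
  1 / 2 < H < 1 ->
  1 / 2 < lam < H ->
  (* the fixed path of B^H is lam-Hoelder on [0, T], T = tau *)
  is_holder lam 0 tau B ->
  is_holder lam (- tau) 0 xi ->
  0 < M1 ->
  (forall psi1 psi2 : R -> R,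
      is_holder lam (- tau) 0 psi1 -> is_holder lam (- tau) 0 psi2 ->
      `|f psi2 - f psi1| <= M1 * supnorm tau (fun th => psi2 th - psi1 th)) ->
  tau < n%:R ->
  (* Euler scheme, Delta = tau / n, t_k = k * Delta *)
  (forall t, - tau <= t <= 0 -> X t = xi t) ->
  (forall (k : nat) (t : R), (k < n)%N ->
      k%:R * (tau / n%:R) <= t <= k.+1%:R * (tau / n%:R) ->
      X t = X (k%:R * (tau / n%:R))
            + f (segment X (k%:R * (tau / n%:R)))
              * (B t - B (k%:R * (tau / n%:R)))) ->
  forall i j l : nat, (i <= j)%N -> (j <= l)%N -> (l <= n)%N ->
  let s := i%:R * (tau / n%:R) in
  let u := j%:R * (tau / n%:R) in
  let t := l%:R * (tau / n%:R) in
  `|remR f B X s t - remR f B X s u - remR f B X u t|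
    <= M1 * supnorm tau (fun th => segment X u th - segment X s th)
          * holder_seminorm lam 0 tau B * `|t - s| `^ lam.
Proof.
move=> tau0 hH hlam hB hxi M10 hf taun hX0 hXk i j l ij jl ln.
cbv zeta.
have l0 : 0 <= lam by lra.
set D := tau / n%:R in hXk *.
set s := i%:R * D; set u := j%:R * D; set t := l%:R * D.
have n0 : (0 < n%:R :> R) by lra.
have D0 : 0 < D by rewrite /D divr_gt0.
have nD : n%:R * D = tau by rewrite /D; field; lra.
have kD : forall k, (k <= n)%N -> 0 <= k%:R * D <= tau.
  move=> k kn; apply/andP; split; first by rewrite mulr_ge0 // ltW.
  by rewrite -nD; apply: ler_wpM2r; [exact: ltW|rewrite ler_nat].
have [CB [CB0 HB]] := holder_nn hB.
have piece : forall k, (k < n)%N -> is_holder lam (k%:R * D) (k.+1%:R * D) X.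
  move=> k kn; exists (`|f (segment X (k%:R * D))| * CB) => a b ha hb.
  have [k0 _] := andP (kD k (ltnW kn)); have [_ k1] := andP (kD k.+1 kn).
  rewrite (hXk k b kn hb) (hXk k a kn ha).
  have -> : forall x y z w c : R, x + z * (y - c) - (x + z * (w - c)) = z * (y - w) by move=> *; ring.
  rewrite normrM -mulrA ler_wpM2l //; apply: HB.
    by move: ha => /andP[? ?]; apply/andP; split; lra.
  by move: hb => /andP[? ?]; apply/andP; split; lra.
have hXn : forall k, (k <= n)%N -> is_holder lam (- tau) (k%:R * D) X.
  elim=> [|k IH] kn.
    rewrite mul0r; apply: holder_ext hxi => x hx; by rewrite hX0.
  apply: (holder_glue l0 _ _ (IH (ltnW kn)) (piece k kn)).
    by have [? _] := andP (kD k (ltnW kn)); lra.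
  by apply: ler_wpM2r; [exact: ltW|rewrite ler_nat].
have [CX HX] := hXn n (leqnn n); rewrite nD in HX.
have hseg : forall v, 0 <= v <= tau -> is_holder lam (- tau) 0 (segment X v).
  move=> v /andP[v0 vt]; exists CX => a b /andP[a1 a2] /andP[b1 b2].
  rewrite /segment.
  have -> : b - a = (v + b) - (v + a) by ring.
  by apply: HX; apply/andP; split; lra.
have hs := kD i (leq_trans ij (leq_trans jl ln)).
have hu := kD j (leq_trans jl ln).
have ht := kD l ln.
have su : s <= u by apply: ler_wpM2r; [exact: ltW|rewrite ler_nat].
have ut : u <= t by apply: ler_wpM2r; [exact: ltW|rewrite ler_nat].
have -> : remR f B X s t - remR f B X s u - remR f B X u t
    = (f (segment X u) - f (segment X s)) * (B t - B u) by rewrite /remR; ring.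
rewrite normrM -mulrA.
have Hs0 : 0 <= holder_seminorm lam 0 tau B.
  apply: sup_ge0 => x [a [b [_ [_ [_ ->]]]]]; apply: divr_ge0 => //; exact: powR_ge0.
apply: ler_pM => //.
  by apply: hf; apply: hseg.
have hsup : has_sup [set x : R | exists s t : R, 0 <= s <= tau /\ 0 <= t <= tau /\ s != t /\
        x = `|B t - B s| / `|t - s| `^ lam].
  split.
    exists (`|B tau - B 0| / `|tau - 0| `^ lam), 0, tau; split; first by apply/andP; split; lra.
    split; first by apply/andP; split; lra.
    by split => //; rewrite eq_sym gt_eqF.
  exists CB => x [a [b [ha [hb [ab ->]]]]].
  have pp : 0 < `|b - a| `^ lam by apply: powR_gt0; rewrite normr_gt0 subr_eq0 eq_sym.
  by rewrite ler_pdivrMr // HB.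
have tup : `|t - u| `^ lam <= `|t - s| `^ lam.
  apply: ge0_ler_powR => //; rewrite ?nnegrE ?normr_ge0 // !ger0_norm; lra.
case: (eqVneq u t) => [<-|utn].
  by rewrite subrr normr0 mulr_ge0 // powR_ge0.
apply: le_trans (ler_wpM2l Hs0 tup).
have pp : 0 < `|t - u| `^ lam by apply: powR_gt0; rewrite normr_gt0 subr_eq0 eq_sym.
rewrite -ler_pdivrMr //.
apply: sup_upper_bound => //.
exists u, t; split => //; split => //.
Qed.
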